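(* Let $S\subseteq 2^E$ be a powerful set and $e\in E$. Then $|S/e|=|S|/2^{r_S(\{e\})}$. If moreover $e$ is deletable, then $|S\setminus e|=\frac12|S|$ if $e$ is a coloop of $S$, and $|S\setminus e|=|S|$ otherwise.
   Context: A set $S\subseteq 2^E$ ($E$ finite) is powerful if for every $X\subseteq E$ the number of members of $S$ contained in $X$ is a power of 2. Its rank function is $r_S(X)=\log_2\big(|S|/|\{Y\in S:Y\subseteq E\setminus X\}|\big)$. The contraction is $S/e=\{X\subseteq E\setminus\{e\}: X\in S\}$. Let $f$ be the $\{0,1\}$-valued indicator function of $S$ and $g(X)=f(X)+f(X\cup\{e\})$ for $X\subseteq E\setminus\{e\}$. The element $e$ is deletable if $\frac{1}{g(\emptyset)}g$ is $\{0,1\}$-valued (i.e. the multiset deletion of $e$ is, up to scaling, a powerful set); in that case $S\setminus e=\{X\subseteq E\setminus\{e\}: X\in S \text{ or } X\cup\{e\}\in S\}$. An element $e$ is a coloop of $S$ if there exists $T\subseteq 2^{E\setminus\{e\}}$ with $S=\{X,X\cup\{e\}:X\in T\}$. *)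

(* Defs.v *)
From mathcomp Require Import ssreflect ssrfun ssrbool eqtype ssrnat seq choice fintype div prime finset.
Set Implicit Arguments. Unset Strict Implicit. Unset Printing Implicit Defensive.

Section Powerful.
Variable E : finType.
Implicit Types (S : {set {set E}}) (X : {set E}) (e : E).

Definition below S X : {set {set E}} := [set Y in S | Y \subset X].

Definition powerful S : Prop := forall X, exists k, #|below S X| = 2 ^ k.

(* r_S(X) = log2 (|S| / |{Y in S : Y ⊆ E \ X}|); for powerful S the
   quotient is an exact power of 2, so log2 is exact. *)
Definition rankS S X : nat := trunc_log 2 (#|S| %/ #|below S (~: X)|).

Definition contraction S e : {set {set E}} := [set X in S | e \notin X].

Definition indS S X : nat := (X \in S).
Definition gdel S e X : nat := indS S X + indS S (X :|: [set e]).

(* e deletable: g / g(∅) is {0,1}-valued on subsets of E - e *)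
Definition deletable S e : Prop :=
  forall X, e \notin X -> gdel S e X = 0 \/ gdel S e X = gdel S e set0.

Definition deletion S e : {set {set E}} :=
  [set X : {set E} | (e \notin X) && ((X \in S) || (X :|: [set e] \in S))].

Definition coloop S e : Prop :=
  exists T : {set {set E}}, (forall X, X \in T -> e \notin X) /\
    S = T :|: [set (X :|: [set e]) | X in T].

End Powerful.

(* Main.v *)
Require Import Defs.
From mathcomp Require Import ssreflect ssrfun ssrbool eqtype ssrnat seq choice fintype div prime finset.

Set Implicit Arguments.
Section Aux.
Context {E : finType}.
Implicit Types (S : {set {set E}}) (X : {set E}) (e : E).

Lemma set0_in S : powerful S -> set0 \in S.
Proof.
move=> pS; have [k hk] := pS set0.
have : 0 < #|below S set0| by rewrite hk expn_gt0.
case/card_gt0P=> Y; rewrite inE => /andP[YS]; rewrite subset0 => /eqP Y0.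
by rewrite -Y0.
Qed.

Lemma addK e X : e \notin X -> (X :|: [set e]) :\ e = X.
Proof. by move=> h; rewrite setUC setU1K. Qed.

Lemma in_add e X : e \in X :|: [set e].
Proof. by rewrite !inE eqxx orbT. Qed.

Lemma gdel0 S e : powerful S -> gdel S e set0 = 1 + ([set e] \in S).
Proof. by move=> pS; rewrite /gdel /indS set0_in // set0U. Qed.

Lemma delB S e : powerful S -> deletable S e -> [set e] \in S ->
  forall X, e \notin X -> (X \in S) = (X :|: [set e] \in S).
Proof.
move=> pS dS he X hX; have := dS X hX; rewrite gdel0 // he /gdel /indS.
by case: (X \in S); case: (X :|: [set e] \in S); case.
Qed.

Lemma delC S e : powerful S -> deletable S e -> [set e] \notin S ->
  forall X, e \notin X -> ~~ ((X \in S) && (X :|: [set e] \in S)).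
Proof.
move=> pS dS he X hX; have := dS X hX; rewrite gdel0 // (negbTE he) /gdel /indS.
by case: (X \in S); case: (X :|: [set e] \in S); case.
Qed.

Lemma remK e X : e \notin X -> X :\ e = X.
Proof. by move=> h; apply/setP=> x; rewrite !inE; case: eqP => // ->; rewrite (negbTE h). Qed.

End Aux.

Theorem proposition4 (E : finType) (S : {set {set E}}) (e : E) :
  powerful S ->
  #|contraction S e| * 2 ^ rankS S [set e] = #|S| /\
  (deletable S e ->
     (coloop S e -> #|deletion S e| * 2 = #|S|) /\
     (~ coloop S e -> #|deletion S e| = #|S|)).
Proof.
move=> pS; split.
  have hc : contraction S e = below S (~: [set e]).
    apply/setP=> X; rewrite !inE; congr (_ && _).
    by rewrite subsetC sub1set !inE.
  have hS : S = below S setT by apply/setP=> X; rewrite !inE subsetT andbT.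
  have [a ha] := pS setT; have [b hb] := pS (~: [set e]).
  have sub : below S (~: [set e]) \subset below S setT.
    by apply/subsetP=> X; rewrite !inE subsetT => /andP[->].
  have ba : b <= a.
    by rewrite -(leq_exp2l _ _ (isT : 1 < 2)) -ha -hb subset_leq_card.
  have hSa : #|S| = 2 ^ a by rewrite {1}hS.
  by rewrite /rankS hc hb hSa -expnB // trunc_expnK // -expnD subnKC.
move=> dS.
have T0 : set0 \in S := set0_in pS.
case: (boolP ([set e] \in S)) => he.
  have B := delB pS dS he.
  have hd : deletion S e = contraction S e.
    apply/setP=> X; rewrite !inE; case: (boolP (e \in X)) => hX /=.
      by rewrite andbF.
    by rewrite andbT -B // orbb.
  have col : S = contraction S e :|: [set (X :|: [set e]) | X in contraction S e].
    apply/setP=> Y; rewrite !inE; apply/idP/idP.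
      move=> YS; case: (boolP (e \in Y)) => hY; last by rewrite YS.
      apply/orP; right; apply/imsetP; exists (Y :\ e).
        have hY' : e \notin Y :\ e by rewrite !inE eqxx.
        by rewrite inE hY' andbT B // setUC setD1K.
      by rewrite setUC setD1K.
    case/orP; first by case/andP.
    by case/imsetP=> X; rewrite inE => /andP[XS hX] ->; rewrite -B.
  have cnt : #|S| = #|contraction S e| * 2.
    rewrite {1}col cardsU disjoint_setI0 ?cards0 ?subn0.
      rewrite card_in_imset ?muln2 ?addnn //.
      move=> X1 X2; rewrite !inE => /andP[_ h1] /andP[_ h2] h.
      by rewrite -(@addK _ e X1 h1) h addK.
    rewrite -setI_eq0; apply/eqP/setP=> Y; rewrite !inE; apply/negP => /andP[/andP[_ hY] /imsetP[X _ hX]].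
    by rewrite hX in_add in hY.
  split; first by move=> _; rewrite hd cnt.
  move=> nc; exfalso; apply: nc; exists (contraction S e); split => //.
  by move=> X; rewrite inE => /andP[].
split.
  case=> T [hT col]; exfalso; move/negP: he; apply.
  move: T0; rewrite col !inE => /orP[h0|].
    apply/orP; right; apply/imsetP; exists set0 => //; by rewrite set0U.
  case/imsetP=> X _ /setP/(_ e); by rewrite in_add inE.
move=> _.
have C := delC pS dS he.
have -> : deletion S e = [set Y :\ e | Y in S].
  apply/setP=> X; rewrite !inE; apply/idP/imsetP.
    case/andP=> hX /orP[XS|XS].
      by exists X => //; rewrite remK.
    by exists (X :|: [set e]) => //; rewrite addK.
  case=> Y YS ->; rewrite !inE eqxx /=.
  case: (boolP (e \in Y)) => hY.
    by rewrite setUC setD1K // YS orbT.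
  by rewrite remK // YS.
apply: card_in_imset => Y1 Y2 Y1S Y2S h.
case: (boolP (e \in Y1)) => h1; case: (boolP (e \in Y2)) => h2.
- by rewrite -(setD1K h1) h setD1K.
- exfalso; move: (C Y2 h2); rewrite Y2S /= -(@remK _ e Y2 h2) -h setUC setD1K //.
  by rewrite Y1S.
- exfalso; move: (C Y1 h1); rewrite Y1S /= -(@remK _ e Y1 h1) h setUC setD1K //.
  by rewrite Y2S.
- by rewrite -(@remK _ e Y1 h1) h remK.
Qed.
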